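(* Let $\xi<-6$. There exists $\phi_0\in(0,\pi/4]$ such that for every $\phi\in(0,\phi_0]$ there is $c=c(\xi,\phi)>0$ such that for $z=u+\mathrm{i}v$ and each $i\in\{1,2,5,6\}$, $$\operatorname{Re}[2\mathrm{i}\theta(z)]\ge c v^2\ \text{ for } z\in\Omega_{i1}\cup\Omega_{i3},\qquad \operatorname{Re}[2\mathrm{i}\theta(z)]\le -c v^2\ \text{ for } z\in\Omega_{i2}\cup\Omega_{i4}.$$
   Context: $\theta(z)=\frac12(z+z^{-1})\big[\xi-2+(z-z^{-1})^2\big]$. For $\xi<-6$ the stationary points of $\theta$ are $\zeta_1=\sqrt{(-\xi-\sqrt{\xi^2-36})/6}\in(0,1)$, $\zeta_2=-\zeta_1$, $\zeta_3=1$, $\zeta_4=-1$, $\zeta_5=1/\zeta_1$, $\zeta_6=-\zeta_5$. With $z=u+\mathrm{i}v$ and $t_\phi=\tan\phi$, the regions are: $\Omega_{11}=\{\zeta_1/2<u<\zeta_1,\ 0<v<(\zeta_1-u)t_\phi\}$, $\Omega_{12}=\{\zeta_1<u<\frac{\zeta_1+1}{2},\ 0<v<(u-\zeta_1)t_\phi\}$, $\Omega_{13}=\{\zeta_1<u<\frac{\zeta_1+1}{2},\ -(u-\zeta_1)t_\phi<v<0\}$, $\Omega_{14}=\{\zeta_1/2<u<\zeta_1,\ -(\zeta_1-u)t_\phi<v<0\}$; $\Omega_{21}=\{\zeta_2<u<\zeta_2/2,\ 0<v<(u-\zeta_2)t_\phi\}$, $\Omega_{22}=\{\frac{\zeta_2-1}{2}<u<\zeta_2,\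 0<v<(\zeta_2-u)t_\phi\}$, $\Omega_{23}=\{\frac{\zeta_2-1}{2}<u<\zeta_2,\ -(\zeta_2-u)t_\phi<v<0\}$, $\Omega_{24}=\{\zeta_2<u<\zeta_2/2,\ -(u-\zeta_2)t_\phi<v<0\}$; $\Omega_{51}=\{\frac{1+\zeta_5}{2}<u<\zeta_5,\ 0<v<(\zeta_5-u)t_\phi\}$, $\Omega_{52}=\{u>\zeta_5,\ 0<v<(u-\zeta_5)t_\phi\}$, $\Omega_{53}=\{u>\zeta_5,\ -(u-\zeta_5)t_\phi<v<0\}$, $\Omega_{54}=\{\frac{1+\zeta_5}{2}<u<\zeta_5,\ -(\zeta_5-u)t_\phi<v<0\}$; $\Omega_{61}=\{\zeta_6<u<\frac{\zeta_6-1}{2},\ 0<v<(u-\zeta_6)t_\phi\}$, $\Omega_{62}=\{u<\zeta_6,\ 0<v<(\zeta_6-u)t_\phi\}$, $\Omega_{63}=\{u<\zeta_6,\ -(\zeta_6-u)t_\phi<v<0\}$, $\Omega_{64}=\{\zeta_6<u<\frac{\zeta_6-1}{2},\ -(u-\zeta_6)t_\phi<v<0\}$. *)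

(* Defs.v *)
From Stdlib Require Import Reals Lra.
From Coquelicot Require Import Coquelicot.
Open Scope R_scope.

Definition theta (xi : R) (z : C) : C :=
  ((/ 2) * (z + / z) * (RtoC (xi - 2) + (z - / z) * (z - / z)))%C.

Definition ReP (xi : R) (z : C) : R := Re (2 * Ci * theta xi z)%C.

Definition zeta1 (xi : R) : R := sqrt ((- xi - sqrt (xi ^ 2 - 36)) / 6).
Definition zeta2 (xi : R) : R := - zeta1 xi.
Definition zeta5 (xi : R) : R := / zeta1 xi.
Definition zeta6 (xi : R) : R := - zeta5 xi.

(* Omega i j, for i in {1,2,5,6}, j in {1,2,3,4}, as a predicate on (u,v),
   z = u + i v; t = tan phi. Other indices: empty. *)
Definition Omega (xi phi : R) (i j : nat) (u v : R) : Prop :=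
  let t := tan phi in
  let z1 := zeta1 xi in let z2 := zeta2 xi in
  let z5 := zeta5 xi in let z6 := zeta6 xi in
  match i, j with
  | 1%nat, 1%nat => z1 / 2 < u < z1 /\ 0 < v < (z1 - u) * t
  | 1%nat, 2%nat => z1 < u < (z1 + 1) / 2 /\ 0 < v < (u - z1) * t
  | 1%nat, 3%nat => z1 < u < (z1 + 1) / 2 /\ - ((u - z1) * t) < v < 0
  | 1%nat, 4%nat => z1 / 2 < u < z1 /\ - ((z1 - u) * t) < v < 0
  | 2%nat, 1%nat => z2 < u < z2 / 2 /\ 0 < v < (u - z2) * t
  | 2%nat, 2%nat => (z2 - 1) / 2 < u < z2 /\ 0 < v < (z2 - u) * t
  | 2%nat, 3%nat => (z2 - 1) / 2 < u < z2 /\ - ((z2 - u) * t) < v < 0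
  | 2%nat, 4%nat => z2 < u < z2 / 2 /\ - ((u - z2) * t) < v < 0
  | 5%nat, 1%nat => (1 + z5) / 2 < u < z5 /\ 0 < v < (z5 - u) * t
  | 5%nat, 2%nat => u > z5 /\ 0 < v < (u - z5) * t
  | 5%nat, 3%nat => u > z5 /\ - ((u - z5) * t) < v < 0
  | 5%nat, 4%nat => (1 + z5) / 2 < u < z5 /\ - ((z5 - u) * t) < v < 0
  | 6%nat, 1%nat => z6 < u < (z6 - 1) / 2 /\ 0 < v < (u - z6) * t
  | 6%nat, 2%nat => u < z6 /\ 0 < v < (z6 - u) * t
  | 6%nat, 3%nat => u < z6 /\ - ((z6 - u) * t) < v < 0
  | 6%nat, 4%nat => z6 < u < (z6 - 1) / 2 /\ - ((u - z6) * t) < v < 0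
  | _, _ => False
  end.

(* Main.v *)
Require Import Defs.
From Stdlib Require Import Reals Lra Psatz.
From Coquelicot Require Import Coquelicot.
Open Scope R_scope.

Definition Gf k u v := let q := u^2+v^2 in 3*u^2*(q+1)^2 - v^2*(q-1)^2 - k*q^2.
Definition Hf k u v := let q := u^2+v^2 in 3*u^2*(2*u^2+v^2+2) - (q-1)^2 - k*(2*u^2+v^2).
Definition RF k u v := - v * (u^2+v^2-1) * Gf k u v / (u^2+v^2)^3.
Definition MH k U := 3*U^2*(3*U^2+2) + (2*U^2+1)^2 + 3*k*U^2.

Lemma ReP_formula xi u v : u <> 0 -> ReP xi (u,v) = RF (6-xi) u v.
Proof.
intro hu. assert (hq: u^2+v^2 <> 0) by nra.
unfold ReP, theta, RF, Gf. simpl. unfold Cinv, Cplus, Cminus, Cmult, Copp, RtoC, Ci; simpl.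
field. nra.
Qed.

Lemma RF_negu k u v : RF k (-u) v = RF k u v.
Proof. unfold RF, Gf. replace ((-u)^2) with (u^2) by ring. reflexivity. Qed.
Lemma RF_negv k u v : RF k u (-v) = - RF k u v.
Proof. unfold RF, Gf. replace ((-v)^2) with (v^2) by ring. unfold Rdiv. ring. Qed.

Lemma G_split k u v : Gf k u v = Gf k u 0 + v^2 * Hf k u v.
Proof. unfold Gf, Hf. ring. Qed.

Lemma G0_fact k a u : a <> 0 -> k*a^2 = 3*(a^2+1)^2 ->
  a^2 * Gf k u 0 = 3*u^2*(a*u-1)*(u-a)*(a*u^2+(a^2+1)*u+a).
Proof.
intros ha hk. assert (E: a^2 * Gf k u 0 = 3*a^2*u^2*(u^2+1)^2 - (k*a^2)*u^4) by (unfold Gf; ring).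
rewrite E, hk. ring.
Qed.

Lemma H_bound k u v U : 0 <= k -> u^2 <= U^2 -> v^2 <= U^2 ->
  - MH k U <= Hf k u v <= MH k U.
Proof.
intros hk hu hv. unfold Hf, MH.
set (x := u^2) in *. set (y := v^2) in *.
assert (hx: 0 <= x) by (unfold x; nra). assert (hy: 0 <= y) by (unfold y; nra).
assert (A1: 0 <= 3*x*(2*x+y+2) <= 3*U^2*(3*U^2+2)).
{ split. apply Rmult_le_pos; lra. apply Rmult_le_compat; lra. }
assert (A2: 0 <= (x+y-1)^2 <= (2*U^2+1)^2).
{ split. apply pow2_ge_0. assert (-(2*U^2+1) <= x+y-1 <= 2*U^2+1) by lra. nra. }
assert (A3: 0 <= k*(2*x+y) <= 3*k*U^2).
{ split. apply Rmult_le_pos; lra. replace (3*k*U^2) with (k*(3*U^2)) by ring. apply Rmult_le_compat_l; lra. }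
lra.
Qed.

Lemma G_pos k u v m M d : 0 < m -> 0 < v -> v < d -> 0 <= M -> M*v <= m/2 ->
  Gf k u 0 >= m*d -> -M <= Hf k u v -> Gf k u v >= m/2*v.
Proof. intros. rewrite G_split. nra. Qed.

Lemma G_neg k u v m M d : 0 < m -> 0 < v -> v < d -> 0 <= M -> M*v <= m/2 ->
  Gf k u 0 <= -(m*d) -> Hf k u v <= M -> Gf k u v <= -(m/2*v).
Proof. intros. rewrite G_split. nra. Qed.

Lemma fin v q A B de be Q : 0 < v -> 0 < q -> q <= Q -> 0 < de -> de <= A -> 0 < be -> be*v <= B ->
  v*A*B/q^3 >= de*be/Q^3 * v^2.
Proof.
intros. assert (h1: v*A*B >= de*be*v^2).
{ replace (de*be*v^2) with ((v*de)*(be*v)) by ring. apply Rle_ge. apply Rmult_le_compat; nra. }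
assert (h2: q^3 <= Q^3) by (apply pow_incr; lra).
assert (h3: 0 < q^3) by (apply pow_lt; lra).
assert (h4: / Q^3 <= / q^3) by (apply Rinv_le_contravar; lra).
assert (h5: 0 < / Q^3) by (apply Rinv_0_lt_compat; lra).
unfold Rdiv. replace (de*be*/Q^3*v^2) with ((de*be*v^2)* / Q^3) by ring.
apply Rle_ge. apply Rle_trans with (de*be*v^2 * /q^3).
apply Rmult_le_compat_l. assert (0 < v^2) by (apply pow_lt; lra). apply Rmult_le_pos; [apply Rmult_le_pos|]; lra. exact h4.
apply Rmult_le_compat_r. apply Rlt_le, Rinv_0_lt_compat; lra. lra.
Qed.

Lemma prod4 a b c e A B C E : 0 <= a <= A -> 0 <= b <= B -> 0 <= c <= C -> 0 <= e <= E ->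
  a*b*c*e <= A*B*C*E.
Proof. intros. repeat apply Rmult_le_compat; try lra; repeat apply Rmult_le_pos; lra. Qed.

Lemma RF_alt k u v : RF k u v = v*(1-(u^2+v^2))*Gf k u v/(u^2+v^2)^3.
Proof. unfold RF, Rdiv. ring. Qed.
Lemma RF_alt2 k u v : RF k u v = - (v*((u^2+v^2)-1)*Gf k u v/(u^2+v^2)^3).
Proof. unfold RF, Rdiv. ring. Qed.
Lemma RF_alt3 k u v : RF k u v = v*((u^2+v^2)-1)*(-Gf k u v)/(u^2+v^2)^3.
Proof. unfold RF, Rdiv. ring. Qed.
Lemma RF_alt4 k u v : RF k u v = - (v*(1-(u^2+v^2))*(-Gf k u v)/(u^2+v^2)^3).
Proof. unfold RF, Rdiv. ring. Qed.

Lemma C11 k p t u v : 0<p<1 -> k*p^2 = 3*(p^2+1)^2 -> 0<t -> t <= 1-p ->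
  MH k 1 * t <= (3/4*p*(1-p))/2 -> p/2<u<p -> 0<v<(p-u)*t ->
  RF k u v >= ((1-p^2)/2 * ((3/4*p*(1-p))/2)/1^3) * v^2.
Proof.
intros hp hk ht ht1 hM hu hv.
set (m := 3/4*p*(1-p)) in *.
assert (hp2: 0 < p^2) by nra.
assert (hk0: 0 < k) by nra.
assert (hvd: v < p-u) by nra.
assert (hG0: Gf k u 0 >= m*(p-u)).
{ assert (F := G0_fact k p u ltac:(lra) hk).
  assert (X: 3*p^2/4*(1-p)*(p-u)*p <= 3*u^2*(1-p*u)*(p-u)*(p*u^2+(p^2+1)*u+p)).
  { apply prod4; split; nra. }
  assert (p^2 * Gf k u 0 >= p^2*(m*(p-u))).
  { unfold m. rewrite F. nra. }
  nra. }
assert (hH := H_bound k u v 1 ltac:(lra) ltac:(nra) ltac:(nra)).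
assert (hM0: 0 <= MH k 1) by (unfold MH; nra).
assert (hvt: v <= t) by nra.
assert (hMv: MH k 1 * v <= m/2) by (apply Rle_trans with (MH k 1 * t); [apply Rmult_le_compat_l|]; lra).
assert (hm: 0 < m) by (unfold m; nra).
assert (hG := G_pos k u v m (MH k 1) (p-u) hm ltac:(lra) hvd hM0 hMv hG0 ltac:(lra)).
assert (hq: u^2+v^2 < (1+p^2)/2).
{ assert ((p-u)*t <= p/2*(1-p)) by (apply Rmult_le_compat; lra).
  assert (v^2 <= (p/2*(1-p))^2) by nra. nra. }
rewrite RF_alt. apply fin with (Q:=1); try lra; nra.
Qed.

Lemma C12 k p t u v : 0<p<1 -> k*p^2 = 3*(p^2+1)^2 -> 0<t -> t <= 1-p ->
  MH k 1 * t <= (3/4*p*(1-p))/2 -> p<u<(p+1)/2 -> 0<v<(u-p)*t ->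
  RF k u v <= - (((1-p^2)/2 * ((3/4*p*(1-p))/2)/1^3) * v^2).
Proof.
intros hp hk ht ht1 hM hu hv.
set (m := 3/4*p*(1-p)) in *.
assert (hp2: 0 < p^2) by nra.
assert (hk0: 0 < k) by nra.
assert (hvd: v < u-p) by nra.
assert (hG0: Gf k u 0 <= -(m*(u-p))).
{ assert (F := G0_fact k p u ltac:(lra) hk).
  assert (X: 3*p^2/4*(1-p)*(u-p)*p <= 3*u^2*(1-p*u)*(u-p)*(p*u^2+(p^2+1)*u+p)).
  { apply prod4; split; nra. }
  assert (p^2 * Gf k u 0 <= -(p^2*(m*(u-p)))).
  { unfold m. rewrite F. nra. }
  nra. }
assert (hH := H_bound k u v 1 ltac:(lra) ltac:(nra) ltac:(nra)).
assert (hM0: 0 <= MH k 1) by (unfold MH; nra).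
assert (hvt: v <= t) by nra.
assert (hMv: MH k 1 * v <= m/2) by (apply Rle_trans with (MH k 1 * t); [apply Rmult_le_compat_l|]; lra).
assert (hm: 0 < m) by (unfold m; nra).
assert (hG := G_neg k u v m (MH k 1) (u-p) hm ltac:(lra) hvd hM0 hMv hG0 ltac:(lra)).
assert (hq: u^2+v^2 < (1+p^2)/2).
{ assert ((u-p)*t <= (1-p)/2*1) by (apply Rmult_le_compat; lra).
  assert (v^2 <= ((1-p)/2)^2) by nra. nra. }
rewrite RF_alt4. apply Ropp_le_contravar, Rge_le. apply fin with (Q:=1); try lra; nra.
Qed.

Lemma C51 k a t u v : 1<a -> k*a^2 = 3*(a^2+1)^2 -> 0<t -> t <= 1 ->
  MH k (3*a) * (2*a*t) <= (3/4*a*(a-1))/2 -> (1+a)/2<u<a -> 0<v<(a-u)*t ->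
  RF k u v >= ((a-1)*(a+3)/4 * ((3/4*a*(a-1))/2)/(13*a^2)^3) * v^2.
Proof.
intros ha hk ht ht1 hM hu hv.
set (m := 3/4*a*(a-1)) in *.
assert (ha2: 0 < a^2) by nra.
assert (hk0: 0 < k) by nra.
assert (hvd: v < a-u) by nra.
assert (hG0: Gf k u 0 <= -(m*(a-u))).
{ assert (F := G0_fact k a u ltac:(lra) hk).
  assert (X: 3*a^2/4*(a-1)*(a-u)*a <= 3*u^2*(a*u-1)*(a-u)*(a*u^2+(a^2+1)*u+a)).
  { apply prod4; split; nra. }
  assert (a^2 * Gf k u 0 <= -(a^2*(m*(a-u)))).
  { unfold m. rewrite F. nra. }
  nra. }
assert (hH := H_bound k u v (3*a) ltac:(lra) ltac:(nra) ltac:(nra)).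
assert (hM0: 0 <= MH k (3*a)) by (unfold MH; nra).
assert (hvt: v <= 2*a*t) by nra.
assert (hMv: MH k (3*a) * v <= m/2) by (apply Rle_trans with (MH k (3*a) * (2*a*t)); [apply Rmult_le_compat_l|]; lra).
assert (hm: 0 < m) by (unfold m; nra).
assert (hG := G_neg k u v m (MH k (3*a)) (a-u) hm ltac:(lra) hvd hM0 hMv hG0 ltac:(lra)).
assert (hq1: (a-1)*(a+3)/4 <= u^2+v^2-1) by nra.
assert (hq2: u^2+v^2 <= 13*a^2) by nra.
rewrite RF_alt3. apply fin; try lra; nra.
Qed.

Lemma C52 k a t u v : 1<a -> k*a^2 = 3*(a^2+1)^2 -> 0<t -> t <= 1 ->
  MH k (3*a) * (2*a*t) <= (3/4*a*(a-1))/2 -> a<u -> 0<v<(u-a)*t ->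
  RF k u v <= - (Rmin ((a-1)*(a+3)/4 * ((3/4*a*(a-1))/2)/(13*a^2)^3) (16/27) * v^2).
Proof.
intros ha hk ht ht1 hM hu hv.
set (m := 3/4*a*(a-1)) in *.
assert (ha2: 0 < a^2) by nra.
assert (hk0: 0 < k) by nra.
assert (hv2: 0 < v^2) by nra.
destruct (Rle_or_lt u (3*a)) as [hu3|hu3].
- apply Rle_trans with (-(((a-1)*(a+3)/4 * (m/2)/(13*a^2)^3) * v^2)).
  2: { apply Ropp_le_contravar, Rmult_le_compat_r. lra. apply Rmin_l. }
  assert (hvd: v < u-a) by nra.
  assert (hG0: Gf k u 0 >= m*(u-a)).
  { assert (F := G0_fact k a u ltac:(lra) hk).
    assert (X: 3*a^2/4*(a-1)*(u-a)*a <= 3*u^2*(a*u-1)*(u-a)*(a*u^2+(a^2+1)*u+a)).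
    { apply prod4; split; nra. }
    assert (a^2 * Gf k u 0 >= a^2*(m*(u-a))).
    { unfold m. rewrite F. nra. }
    nra. }
  assert (hH := H_bound k u v (3*a) ltac:(lra) ltac:(nra) ltac:(nra)).
  assert (hM0: 0 <= MH k (3*a)) by (unfold MH; nra).
  assert (hvt: v <= 2*a*t) by nra.
  assert (hMv: MH k (3*a) * v <= m/2) by (apply Rle_trans with (MH k (3*a) * (2*a*t)); [apply Rmult_le_compat_l|]; lra).
  assert (hm: 0 < m) by (unfold m; nra).
  assert (hG := G_pos k u v m (MH k (3*a)) (u-a) hm ltac:(lra) hvd hM0 hMv hG0 ltac:(lra)).
  assert (hq1: (a-1)*(a+3)/4 <= u^2+v^2-1) by nra.
  assert (hv2a: v <= 2*a) by nra.
  assert (hq2: u^2+v^2 <= 13*a^2) by nra.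
  rewrite RF_alt2. apply Ropp_le_contravar, Rge_le. apply fin; try lra; nra.
- apply Rle_trans with (-((16/27) * v^2)).
  2: { apply Ropp_le_contravar, Rmult_le_compat_r. lra. apply Rmin_r. }
  assert (hvu: v <= u) by nra.
  set (q := u^2+v^2).
  assert (hu9: 9*a^2 < u^2) by nra.
  assert (ha1: 1 < a^2) by nra.
  assert (hq: 9 < q) by (unfold q; nra).
  assert (hk12: k <= 12*a^2) by nra.
  assert (hG: q^2*(2/3*u^2) <= Gf k u v).
  { assert (E: Gf k u v - q^2*(3*u^2-v^2-k) = 3*u^2*(2*q+1) + v^2*(2*q-1)) by (unfold Gf, q; ring).
    assert (3*u^2-v^2-k >= 2/3*u^2) by nra.
    assert (0 < q^2) by nra. nra. }
  assert (hW2: 2/3*u^2 <= Gf k u v / q^2).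
  { replace (2/3*u^2) with ((q^2*(2/3*u^2)) * /q^2) by (field; lra).
    unfold Rdiv. apply Rmult_le_compat_r. apply Rlt_le, Rinv_0_lt_compat. nra. exact hG. }
  assert (hW1: 8/9 <= (q-1)/q).
  { replace (8/9) with ((8/9*q) * /q) by (field; lra). unfold Rdiv.
    apply Rmult_le_compat_r. apply Rlt_le, Rinv_0_lt_compat. lra. lra. }
  rewrite RF_alt2. fold q.
  replace (v*(q-1)*Gf k u v/q^3) with (v*((q-1)/q)*(Gf k u v/q^2)) by (field; lra).
  apply Ropp_le_contravar.
  assert (v*(8/9)*(2/3*u^2) <= v*((q-1)/q)*(Gf k u v/q^2)).
  { apply Rmult_le_compat. nra. nra. apply Rmult_le_compat_l; lra. exact hW2. }
  assert (hvu2: v <= u^2) by nra.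
  assert (v*v <= v*u^2) by (apply Rmult_le_compat_l; lra).
  nra.
Qed.

Lemma zeta1_facts xi : xi < -6 -> 0 < zeta1 xi < 1 /\
  (6-xi) * (zeta1 xi)^2 = 3*((zeta1 xi)^2+1)^2.
Proof.
intro hxi. unfold zeta1.
set (S := sqrt (xi^2-36)).
assert (hS0: 0 <= S) by apply sqrt_pos.
assert (hS2: S*S = xi^2-36) by (apply sqrt_sqrt; nra).
set (s := (-xi - S)/6).
assert (hs0: 0 < s) by (unfold s; nra).
assert (hs1: s < 1) by (unfold s; nra).
assert (hp2: sqrt s ^2 = s) by (rewrite <- Rsqr_pow2; apply Rsqr_sqrt; lra).
assert (hp0: 0 < sqrt s) by (apply sqrt_lt_R0; lra).
rewrite hp2. split. split. lra. nra.
unfold s. nra.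
Qed.

Lemma conv_ge xi u v c c' : u <> 0 -> 0 < c -> c <= c' -> RF (6-xi) u v >= c' * v^2 -> ReP xi (u,v) >= c*v^2.
Proof. intros. rewrite ReP_formula by auto. assert (0 <= v^2) by nra. nra. Qed.
Lemma conv_le xi u v c c' : u <> 0 -> 0 < c -> c <= c' -> RF (6-xi) u v <= -(c' * v^2) -> ReP xi (u,v) <= -(c*v^2).
Proof. intros. rewrite ReP_formula by auto. assert (0 <= v^2) by nra. nra. Qed.
Lemma flipv_ge k u v c : RF k u (-v) <= -(c*(-v)^2) -> RF k u v >= c*v^2.
Proof. rewrite RF_negv. replace ((-v)^2) with (v^2) by ring. lra. Qed.
Lemma flipv_le k u v c : RF k u (-v) >= c*(-v)^2 -> RF k u v <= -(c*v^2).
Proof. rewrite RF_negv. replace ((-v)^2) with (v^2) by ring. lra. Qed.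
Lemma flipu k u v : RF k (-u) v = RF k u v.
Proof. apply RF_negu. Qed.

Ltac fin := first [assumption | lra | nra].

Theorem mainTheorem5 (xi : R) (hxi : xi < -6) :
  exists phi0 : R, 0 < phi0 <= PI / 4 /\
    forall phi : R, 0 < phi <= phi0 ->
      exists c : R, 0 < c /\
        forall i : nat, (i = 1%nat \/ i = 2%nat \/ i = 5%nat \/ i = 6%nat) ->
          forall u v : R,
            ((Omega xi phi i 1 u v \/ Omega xi phi i 3 u v) ->
               ReP xi (u, v) >= c * v ^ 2) /\
            ((Omega xi phi i 2 u v \/ Omega xi phi i 4 u v) ->
               ReP xi (u, v) <= - (c * v ^ 2)).
Proof.
destruct (zeta1_facts xi hxi) as [hp hkp].
remember (zeta1 xi) as p eqn:Hp.
set (k := 6 - xi) in *.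
set (a := / p).
assert (ha: 1 < a).
{ unfold a. rewrite <- Rinv_1. apply Rinv_lt_contravar; lra. }
assert (hka: k * a^2 = 3*(a^2+1)^2).
{ unfold a. replace (3*((/p)^2+1)^2) with (3*(p^2+1)^2 / p^4) by (field; lra).
  rewrite <- hkp. field; lra. }
assert (hk0: 0 < k) by (unfold k; lra).
set (m1 := 3/4*p*(1-p)). set (M1 := MH k 1).
set (m5 := 3/4*a*(a-1)). set (M5 := MH k (3*a)).
assert (hm1: 0 < m1) by (unfold m1; nra).
assert (hm5: 0 < m5) by (unfold m5; nra).
assert (hM1: 1 <= M1) by (unfold M1, MH; nra).
assert (hM5: 1 <= M5) by (unfold M5, MH; nra).
set (t0 := Rmin (1-p) (Rmin (m1/2/M1) (m5/2/(M5*(2*a))))).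
assert (ht0p: 0 < t0).
{ unfold t0. apply Rmin_pos. lra. apply Rmin_pos; apply Rdiv_lt_0_compat; nra. }
assert (ht01: t0 <= 1-p) by apply Rmin_l.
assert (ht02: t0 <= m1/2/M1) by (eapply Rle_trans; [apply Rmin_r|apply Rmin_l]).
assert (ht03: t0 <= m5/2/(M5*(2*a))) by (eapply Rle_trans; [apply Rmin_r|apply Rmin_r]).
exists (atan t0). split. split.
{ rewrite <- atan_0. apply atan_increasing; lra. }
{ rewrite <- atan_1. left. apply atan_increasing; lra. }
intros phi hphi.
assert (hPI := PI_RGT_0).
assert (hphi4: phi < PI/2).
{ assert (atan t0 < PI/4) by (rewrite <- atan_1; apply atan_increasing; lra). lra. }
set (t := tan phi).
assert (ht: 0 < t) by (apply tan_gt_0; lra).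
assert (htt0: t <= t0).
{ destruct hphi as [hphi0 [hlt|heq]].
  - left. rewrite <- (tan_atan t0). apply tan_increasing; try lra.
    destruct (atan_bound t0); lra.
  - unfold t. rewrite heq, tan_atan. lra. }
assert (hc1: M1 * t <= m1/2).
{ assert (t <= m1/2/M1) by lra. apply (Rmult_le_compat_l M1) in H; [|lra].
  replace (M1 * (m1/2/M1)) with (m1/2) in H by (field; lra). exact H. }
assert (hc5: M5 * (2*a*t) <= m5/2).
{ assert (t <= m5/2/(M5*(2*a))) by lra. apply (Rmult_le_compat_l (M5*(2*a))) in H; [|nra].
  replace (M5 * (2*a) * (m5/2/(M5*(2*a)))) with (m5/2) in H by (field; lra). nra. }
set (c1 := (1-p^2)/2 * (m1/2)/1^3).
set (c5 := Rmin ((a-1)*(a+3)/4 * (m5/2)/(13*a^2)^3) (16/27)).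
assert (hc1p: 0 < c1) by (unfold c1; apply Rdiv_lt_0_compat; [apply Rmult_lt_0_compat; nra | apply pow_lt; lra]).
assert (hc5p: 0 < c5).
{ unfold c5. apply Rmin_pos; [|lra]. apply Rdiv_lt_0_compat. apply Rmult_lt_0_compat; [|lra]. apply Rmult_lt_0_compat; [|lra]; nra. apply pow_lt. nra. }
assert (hc5a: c5 <= (a-1)*(a+3)/4 * (m5/2)/(13*a^2)^3) by apply Rmin_l.
exists (Rmin c1 c5). split. apply Rmin_pos; lra.
assert (hcc1: Rmin c1 c5 <= c1) by apply Rmin_l.
assert (hcc5: Rmin c1 c5 <= c5) by apply Rmin_r.
assert (hcc5': Rmin c1 c5 <= (a-1)*(a+3)/4 * (m5/2)/(13*a^2)^3) by lra.
assert (hcp: 0 < Rmin c1 c5) by (apply Rmin_pos; lra).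
assert (ht1: t <= 1) by lra.
assert (htp: t <= 1-p) by lra.
intros i hi u v.
destruct hi as [ -> | [ -> | [ -> | -> ] ] ]; unfold Omega; cbv beta iota zeta; fold t;
  try unfold zeta6; try unfold zeta5; try unfold zeta2; rewrite <- Hp; try fold a; split; intros [H|H].
all: destruct H as [Hu Hv].
- apply conv_ge with c1; try lra. apply C11 with t; fin.
- apply conv_ge with c1; try lra. apply flipv_ge. apply C12 with t; fin.
- apply conv_le with c1; try lra. apply C12 with t; fin.
- apply conv_le with c1; try lra. apply flipv_le. apply C11 with t; fin.
- apply conv_ge with c1; try lra. rewrite <- flipu. apply C11 with t; fin.
- apply conv_ge with c1; try lra. rewrite <- flipu. apply flipv_ge. apply C12 with t; fin.
- apply conv_le with c1; try lra. rewrite <- flipu. apply C12 with t; fin.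
- apply conv_le with c1; try lra. rewrite <- flipu. apply flipv_le. apply C11 with t; fin.
- apply conv_ge with ((a-1)*(a+3)/4 * (m5/2)/(13*a^2)^3); try lra. apply C51 with t; fin.
- apply conv_ge with c5; try lra. apply flipv_ge. apply C52 with t; fin.
- apply conv_le with c5; try lra. apply C52 with t; fin.
- apply conv_le with ((a-1)*(a+3)/4 * (m5/2)/(13*a^2)^3); try lra. apply flipv_le. apply C51 with t; fin.
- apply conv_ge with ((a-1)*(a+3)/4 * (m5/2)/(13*a^2)^3); try lra. rewrite <- flipu. apply C51 with t; fin.
- apply conv_ge with c5; try lra. rewrite <- flipu. apply flipv_ge. apply C52 with t; fin.
- apply conv_le with c5; try lra. rewrite <- flipu. apply C52 with t; fin.
- apply conv_le with ((a-1)*(a+3)/4 * (m5/2)/(13*a^2)^3); try lra. rewrite <- flipu. apply flipv_le. apply C51 with t; fin.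
Qed.
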